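(* Let $2\le m\le n$. Then $\mathcal{P}(\mathrm{K}_{m,n})=\mathcal{AM}(\mathrm{K}_{m,n})$.
   Context: $\mathrm{K}_{m,n}$ is the poset $\{x_1,\dots,x_m,y_1,\dots,y_n\}$ with $x_i<y_j$ for all $i,j$ and no other relations between distinct elements. For a finite connected poset $X$ and $x<y$, $e_{xy}$ denotes the incidence-algebra basis element, and $B=\{e_{xy}:x<y\}$. $\mathcal{C}(X)$ is the set of maximal chains. For a bijection $\theta:B\to B$ and $C:u_1<\dots<u_k$ in $\mathcal{C}(X)$, $\theta$ is increasing on $C$ if there is $D:v_1<\dots<v_k$ in $\mathcal{C}(X)$ with $\theta(e_{u_iu_j})=e_{v_iv_j}$ for all $i<j$, decreasing if $\theta(e_{u_iu_j})=e_{v_{k-j+1}v_{k-i+1}}$ for all $i<j$. $\mathcal{M}(X)$: bijections $B\to B$ increasing or decreasing on every maximal chain. A walk is a sequence $u_0,\dots,u_r$ where for each $i$ one of $u_i,u_{i+1}$ covers the other; closed if $u_0=u_r$. For a closed walk $\Gamma:u_0,\dots,u_r=u_0$ and $z\in X$: $s^+_{\theta,\Gamma}(z)=|\{i: u_i<u_{i+1},\ \exists w>z,\ \theta(e_{zw})=e_{u_iu_{i+1}}\}|$, $s^-_{\theta,\Gamma}(z)=|\{i: u_i>u_{i+1},\ \exists w>z,\ \theta(e_{zw})=e_{u_{i+1}u_i}\}|$, $t^+_{\theta,\Gamma}(z)=|\{i: u_i<u_{i+1},\ \exists w<z,\ \theta(e_{wz})=e_{u_iu_{i+1}}\}|$,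 $t^-_{\theta,\Gamma}(z)=|\{i: u_i>u_{i+1},\ \exists w<z,\ \theta(e_{wz})=e_{u_{i+1}u_i}\}|$, $0\le i\le r-1$. $\theta$ is admissible if $s^+-s^-=t^+-t^-$ at every $z$ for every closed walk; $\mathcal{AM}(X)$ is the set of admissible elements of $\mathcal{M}(X)$. $\theta:B\to B$ is proper if there is an automorphism $\lambda$ of $X$ with $\theta(e_{xy})=e_{\lambda(x)\lambda(y)}$ for all $x<y$, or an anti-automorphism $\lambda$ with $\theta(e_{xy})=e_{\lambda(y)\lambda(x)}$ for all $x<y$; $\mathcal{P}(X)$ is the set of proper bijections. *)

(* Defs.v *)
From mathcomp Require Import all_boot all_order all_algebra.
Set Implicit Arguments. Unset Strict Implicit. Unset Printing Implicit Defensive.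

(* A finite poset is given by a finite carrier T and its strict order lt. *)
Section Poset.
Variables (T : finType) (lt : rel T).

Definition covers (x y : T) : bool := lt x y && ~~ [exists z, lt x z && lt z y].

(* B = { e_xy : x < y }, encoded as the pairs (x,y) with x < y *)
Definition Bset := {p : (T * T)%type | lt p.1 p.2}.

Definition is_chain (s : seq T) : bool := sorted lt s.
Definition max_chain (s : seq T) : Prop :=
  is_chain s /\ forall t, is_chain t -> {subset s <= t} -> {subset t <= s}.

Definition increasing_on (theta : Bset -> Bset) (C : seq T) : Prop :=
  exists D : seq T, max_chain D /\ size D = size C /\
    forall (x0 : T) (i j : nat), i < j -> j < size C ->
      forall b : Bset, val b = (nth x0 C i, nth x0 C j) ->
        val (theta b) = (nth x0 D i, nth x0 D j).

(* theta is decreasing on C; 0-indexed: e_{u_i u_j} |-> e_{v_(k-1-j) v_(k-1-i)} *)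
Definition decreasing_on (theta : Bset -> Bset) (C : seq T) : Prop :=
  exists D : seq T, max_chain D /\ size D = size C /\
    forall (x0 : T) (i j : nat), i < j -> j < size C ->
      forall b : Bset, val b = (nth x0 C i, nth x0 C j) ->
        val (theta b) = (nth x0 D (size C - 1 - j), nth x0 D (size C - 1 - i)).

Definition inM (theta : Bset -> Bset) : Prop :=
  bijective theta /\
  forall C, max_chain C -> increasing_on theta C \/ decreasing_on theta C.

Definition adjacent (x y : T) : bool := covers x y || covers y x.
Definition closed_walk (u0 : T) (s : seq T) : Prop :=
  path adjacent u0 s /\ last u0 s = u0.

(* the walk Gamma : u_0, ..., u_r with u_(i+1) = nth u0 s i, r = size s *)
Definition s_plus (theta : Bset -> Bset) (u0 : T) (s : seq T) (z : T) : nat :=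
  \sum_(i < size s)
    [&& lt (nth u0 (u0 :: s) i) (nth u0 (u0 :: s) i.+1) &
        [exists b : Bset, ((val b).1 == z) &&
           (val (theta b) == (nth u0 (u0 :: s) i, nth u0 (u0 :: s) i.+1))]].
Definition s_minus (theta : Bset -> Bset) (u0 : T) (s : seq T) (z : T) : nat :=
  \sum_(i < size s)
    [&& lt (nth u0 (u0 :: s) i.+1) (nth u0 (u0 :: s) i) &
        [exists b : Bset, ((val b).1 == z) &&
           (val (theta b) == (nth u0 (u0 :: s) i.+1, nth u0 (u0 :: s) i))]].
Definition t_plus (theta : Bset -> Bset) (u0 : T) (s : seq T) (z : T) : nat :=
  \sum_(i < size s)
    [&& lt (nth u0 (u0 :: s) i) (nth u0 (u0 :: s) i.+1) &
        [exists b : Bset, ((val b).2 == z) &&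
           (val (theta b) == (nth u0 (u0 :: s) i, nth u0 (u0 :: s) i.+1))]].
Definition t_minus (theta : Bset -> Bset) (u0 : T) (s : seq T) (z : T) : nat :=
  \sum_(i < size s)
    [&& lt (nth u0 (u0 :: s) i.+1) (nth u0 (u0 :: s) i) &
        [exists b : Bset, ((val b).2 == z) &&
           (val (theta b) == (nth u0 (u0 :: s) i.+1, nth u0 (u0 :: s) i))]].

Definition admissible (theta : Bset -> Bset) : Prop :=
  forall (u0 : T) (s : seq T), closed_walk u0 s -> forall z : T,
    ((s_plus theta u0 s z)%:Z - (s_minus theta u0 s z)%:Z =
     (t_plus theta u0 s z)%:Z - (t_minus theta u0 s z)%:Z)%R.

Definition inAM (theta : Bset -> Bset) : Prop := inM theta /\ admissible theta.

Definition automorphism (f : T -> T) : Prop :=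
  bijective f /\ forall x y, lt (f x) (f y) = lt x y.
Definition anti_automorphism (f : T -> T) : Prop :=
  bijective f /\ forall x y, lt (f y) (f x) = lt x y.

Definition is_proper (theta : Bset -> Bset) : Prop :=
  (exists f, automorphism f /\
     forall b : Bset, val (theta b) = (f (val b).1, f (val b).2)) \/
  (exists f, anti_automorphism f /\
     forall b : Bset, val (theta b) = (f (val b).2, f (val b).1)).

End Poset.

(* K_{m,n}: elements inl i = x_i, inr j = y_j, with x_i < y_j *)
Definition Kmn_T (m n : nat) : finType := ('I_m + 'I_n)%type.
Definition Kmn_lt (m n : nat) : rel (Kmn_T m n) :=
  fun a b => match a, b with inl _, inr _ => true | _, _ => false end.
Arguments Kmn_lt : clear implicits.

(* Main.v *)
Require Import Defs.
From mathcomp Require Import all_boot all_order all_algebra zify.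
Set Implicit Arguments. Unset Strict Implicit. Unset Printing Implicit Defensive.

Definition mkB m n (i : 'I_m) (j : 'I_n) : Bset (Kmn_lt m n) := exist _ (inl i, inr j) isT.
Definition bx m n (b : Bset (Kmn_lt m.+1 n)) : 'I_m.+1 :=
  match (val b).1 with inl i => i | inr _ => ord0 end.
Definition by_ m n (b : Bset (Kmn_lt m n.+1)) : 'I_n.+1 :=
  match (val b).2 with inr j => j | inl _ => ord0 end.

Lemma bE m n (b : Bset (Kmn_lt m.+1 n.+1)) : b = mkB (bx b) (by_ b).
Proof. by case: b => [[[i|i] [j|j]] H] //; apply: val_inj. Qed.

Lemma sorted_K m n (t : seq (Kmn_T m n)) : sorted (Kmn_lt m n) t ->
  size t <= 1 \/ exists i j, t = [:: inl i; inr j].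
Proof.
case: t => [|a [|b [|c t]]] //=; try by left.
- by case: a => a; case: b => b //= _; right; exists a, b.
- by case: a => a; case: b => b; case: c => c.
Qed.

Lemma max_chainK m n (C : seq (Kmn_T m.+1 n.+1)) :
  max_chain (Kmn_lt m.+1 n.+1) C <-> exists i j, C = [:: inl i; inr j].
Proof.
split.
- case=> Hs Hmax; case: (sorted_K Hs) => // Hsz; exfalso.
  case: C Hs Hmax Hsz => [|a [|b C]] //= Hs Hmax _.
  + have H0 : {subset [::] <= [:: inl (@ord0 m); inr (@ord0 n)]} by [].
    have := Hmax [:: inl ord0; inr ord0] isT H0.
    by move=> /(_ (inl ord0)); rewrite !inE eqxx => /(_ isT).
  + case: a Hmax => [i|j] Hmax.
    * have := Hmax [:: inl i; inr ord0] isT.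
      have H : {subset [:: inl i] <= [:: inl i; inr (@ord0 n)]}.
        by move=> x; rewrite !inE => ->.
      by move=> /(_ H (inr ord0)); rewrite !inE eqxx orbT => /(_ isT).
    * have := Hmax [:: inl ord0; inr j] isT.
      have H : {subset [:: inr j] <= [:: inl (@ord0 m); inr j]}.
        by move=> x; rewrite !inE => ->; rewrite orbT.
      by move=> /(_ H (inl ord0)); rewrite !inE eqxx => /(_ isT).
- case=> i [j ->]; split => // t Ht Hsub.
  have Hi : inl i \in t by apply: Hsub; rewrite !inE eqxx.
  have Hj : inr j \in t by apply: Hsub; rewrite !inE eqxx orbT.
  case: (sorted_K Ht) => [|[i' [j' Et]]].
  + case: t {Ht Hsub} Hi Hj => [|a [|b t]] //=.
    by rewrite !inE => /eqP <- /eqP.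
  + move: Hi Hj; rewrite Et !inE.
    case/orP => /eqP // [->]; case/orP => /eqP // [->].
    by move=> x.
Qed.

Lemma incr_K m n (theta : Bset (Kmn_lt m.+1 n.+1) -> Bset (Kmn_lt m.+1 n.+1)) C :
  max_chain (Kmn_lt m.+1 n.+1) C -> increasing_on theta C.
Proof.
case/max_chainK=> i [j ->].
set e := theta (mkB i j).
exists [:: inl (bx e); inr (by_ e)]; split; first by apply/max_chainK; eauto.
split=> // x0 [|[|i0]] [|[|j0]] //= _ _ b Hb.
have -> : b = mkB i j by apply: val_inj.
by rewrite -/e {1}(bE e).
Qed.
Lemma rot_sum (T : eqType) (u0 : T) s v : last u0 s = u0 ->
  \sum_(i < size s) (v == nth u0 (u0::s) i) = \sum_(i < size s) (v == nth u0 (u0::s) i.+1).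
Proof.
case: s => [|a s] Hl; first by rewrite !big_ord0.
rewrite /= in Hl.
rewrite big_ord_recl big_ord_recr addnC; congr (_ + _).
  congr (_ == _); transitivity (last u0 (a :: s)); first by rewrite /= Hl.
  by rewrite -nth_last.
Qed.

Section Adm.
Variables (T : finType) (lt : rel T) (theta : Bset lt -> Bset lt).
Hypothesis asym : forall x y, lt x y -> ~~ lt y x.

Lemma adm_gen (u0 : T) s z v (flip : bool) :
  closed_walk lt u0 s ->
  (forall x y, lt x y ->
     [exists b : Bset lt, ((val b).1 == z) && (val (theta b) == (x, y))] =
       (v == if flip then y else x)) ->
  (forall x y, lt x y ->
     [exists b : Bset lt, ((val b).2 == z) && (val (theta b) == (x, y))] =
       (v == if flip then x else y)) ->
  ((s_plus theta u0 s z)%:Z - (s_minus theta u0 s z)%:Z =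
     (t_plus theta u0 s z)%:Z - (t_minus theta u0 s z)%:Z)%R.
Proof.
case=> /(pathP u0) Hp Hl H1 H2.
suff: s_plus theta u0 s z + t_minus theta u0 s z = s_minus theta u0 s z + t_plus theta u0 s z by lia.
rewrite /s_plus /t_minus /s_minus /t_plus -!big_split /=.
have step : forall i, i < size s ->
  let u := nth u0 (u0 :: s) i in let u' := nth u0 (u0 :: s) i.+1 in
  [&& lt u u' & [exists b : Bset lt, ((val b).1 == z) && (val (theta b) == (u, u'))]] +
  [&& lt u' u & [exists b : Bset lt, ((val b).2 == z) && (val (theta b) == (u', u))]] =
  (v == if flip then u' else u) /\
  [&& lt u' u & [exists b : Bset lt, ((val b).1 == z) && (val (theta b) == (u', u))]] +
  [&& lt u u' & [exists b : Bset lt, ((val b).2 == z) && (val (theta b) == (u, u'))]] =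
  (v == if flip then u else u').
  move=> i /Hp; rewrite /adjacent /covers /=.
  set u := nth u0 (u0 :: s) i; set u' := nth u0 s i.
  case/orP=> /andP [l _].
    by rewrite l (negbTE (asym l)) (H1 _ _ l) (H2 _ _ l) /= addn0 add0n.
  by rewrite l (negbTE (asym l)) (H1 _ _ l) (H2 _ _ l) /= addn0 add0n.
rewrite (eq_bigr (fun i : 'I_(size s) => nat_of_bool (v == if flip then nth u0 (u0 :: s) i.+1 else nth u0 (u0 :: s) i))); last first.
  by move=> i _; case: (step i (ltn_ord i)).
rewrite [in RHS](eq_bigr (fun i : 'I_(size s) => nat_of_bool (v == if flip then nth u0 (u0 :: s) i else nth u0 (u0 :: s) i.+1))); last first.
  by move=> i _; case: (step i (ltn_ord i)).
by clear H1 H2 step; case: flip; rewrite rot_sum.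
Qed.
End Adm.

Lemma easy m n (theta : Bset (Kmn_lt m.+1 n.+1) -> Bset (Kmn_lt m.+1 n.+1)) :
  is_proper theta -> inAM theta.
Proof.
have asym : forall x y : Kmn_T m.+1 n.+1, Kmn_lt _ _ x y -> ~~ Kmn_lt _ _ y x.
  by case=> x [] y.
have incr : forall C, max_chain (Kmn_lt m.+1 n.+1) C -> increasing_on theta C \/ decreasing_on theta C.
  by move=> C HC; left; exact: incr_K.
case=> [[f [[[g fg gf] hf] ht]] | [f [[[g fg gf] hf] ht]]].
- split; first split => //.
    apply: injF_bij => b1 b2 /(congr1 val); rewrite !ht => -[/(can_inj fg) e1 /(can_inj fg) e2].
    by apply: val_inj; rewrite [val b1]surjective_pairing [val b2]surjective_pairing e1 e2.
  move=> u0 s Hw z; apply: (adm_gen asym (v := f z) (flip := false) Hw) => x y lxy.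
    apply/existsP/eqP => [[b /andP [/eqP <- /eqP]]|e]; try subst x; try subst y; first by rewrite ht => -[].
    have l : Kmn_lt _ _ z (g y) by rewrite -hf gf.
    by exists (exist _ (z, g y) l); rewrite ht /= gf !eqxx.
  apply/existsP/eqP => [[b /andP [/eqP <- /eqP]]|e]; try subst x; try subst y; first by rewrite ht => -[].
  have l : Kmn_lt _ _ (g x) z by rewrite -hf gf.
  by exists (exist _ (g x, z) l); rewrite ht /= gf !eqxx.
- split; first split => //.
    apply: injF_bij => b1 b2 /(congr1 val); rewrite !ht => -[/(can_inj fg) e2 /(can_inj fg) e1].
    by apply: val_inj; rewrite [val b1]surjective_pairing [val b2]surjective_pairing e1 e2.
  move=> u0 s Hw z; apply: (adm_gen asym (v := f z) (flip := true) Hw) => x y lxy.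
    apply/existsP/eqP => [[b /andP [/eqP <- /eqP]]|e]; try subst x; try subst y; first by rewrite ht => -[].
    have l : Kmn_lt _ _ z (g x) by rewrite -hf gf.
    by exists (exist _ (z, g x) l); rewrite ht /= gf !eqxx.
  apply/existsP/eqP => [[b /andP [/eqP <- /eqP]]|e]; try subst x; try subst y; first by rewrite ht => -[].
  have l : Kmn_lt _ _ (g y) z by rewrite -hf gf.
  by exists (exist _ (g y, z) l); rewrite ht /= gf !eqxx.
Qed.

Lemma coversK m n (i : 'I_m) (j : 'I_n) : covers (Kmn_lt m n) (inl i) (inr j).
Proof. by rewrite /covers /=; apply/existsP => -[[w|w]] /andP []. Qed.

Lemma ex_inv m n (theta g : Bset (Kmn_lt m n) -> Bset (Kmn_lt m n))
  (P : pred (Bset (Kmn_lt m n))) a c : cancel theta g -> cancel g theta ->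
  [exists b, P b && (val (theta b) == (inl a, inr c))] = P (g (mkB a c)).
Proof.
move=> tg gt; apply/existsP/idP => [[b /andP [Pb]]|Pe].
  by change (inl a, inr c) with (val (mkB a c)) => /eqP /val_inj <-; rewrite tg.
by exists (g (mkB a c)); rewrite Pe gt eqxx.
Qed.

Lemma cycle4 m n (theta g : Bset (Kmn_lt m n) -> Bset (Kmn_lt m n)) :
  cancel theta g -> cancel g theta -> admissible theta -> forall a b c d z,
  ((val (g (mkB a c))).1 == z) + ((val (g (mkB b d))).1 == z)
   + ((val (g (mkB b c))).2 == z) + ((val (g (mkB a d))).2 == z)
  = ((val (g (mkB b c))).1 == z) + ((val (g (mkB a d))).1 == z)
   + ((val (g (mkB a c))).2 == z) + ((val (g (mkB b d))).2 == z).
Proof.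
move=> tg gt adm a b c d z.
have cw : closed_walk (Kmn_lt m n) (inl a) [:: inr c; inl b; inr d; inl a].
  by split => //=; rewrite /adjacent !coversK ?orbT.
have := adm _ _ cw z.
rewrite /s_plus /s_minus /t_plus /t_minus !big_ord_recl big_ord0 /=.
rewrite !(ex_inv _ _ _ tg gt) !big_ord0; lia.
Qed.

Lemma ms (X : eqType) (x1 x2 x3 x4 : X) :
  (forall k, (x1 == k) + (x2 == k) = (x3 == k) + (x4 == k)) ->
  (x1 = x3 /\ x2 = x4) \/ (x1 = x4 /\ x2 = x3).
Proof.
move=> H; have h1 := H x1; have h2 := H x2; rewrite !eqxx /= in h1 h2.
case: (eqVneq x3 x1) h1 h2 => [->|n31] h1 h2.
  left; split => //; move: h2; case: (eqVneq x4 x2) => //= _; lia.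
right; case: (eqVneq x4 x1) h1 h2 => [->|n41] /= h1 h2; last lia.
split => //; move: h2; case: (eqVneq x3 x2) => //= _; lia.
Qed.

Lemma dep (m n : nat) (X : eqType) (F : 'I_m -> 'I_n -> X) :
  (forall a b c d, (F a c = F b c /\ F b d = F a d) \/ (F a c = F a d /\ F b d = F b c)) ->
  (forall i j j', F i j = F i j') \/ (forall i i' j, F i j = F i' j).
Proof.
move=> H.
case: (boolP [forall a, forall b, forall c, F a c == F b c]) => [Hc|].
  by right => i i' j; apply/eqP; move/forallP/(_ i)/forallP/(_ i')/forallP/(_ j): Hc.
move=> /forallPn [a /forallPn [b /forallPn [c /eqP nF]]].
have row : forall e, F e c <> F a c \/ F e c <> F b c -> forall d, F e d = F e c.
  move=> e [ne|ne] d.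
    case: (H a e c d) => [[/esym //]|[_ ->]] //.
  case: (H b e c d) => [[/esym //]|[_ ->]] //.
left => i j j'.
have : F i c <> F a c \/ F i c <> F b c.
  case: (eqVneq (F i c) (F a c)) => [e|/eqP]; last by left.
  by right => e'; apply: nF; rewrite -e -e'.
by move/row => Hr; rewrite Hr [in RHS]Hr.
Qed.

Lemma inl_eq (A B : eqType) (x y : A) : (inl x == inl y :> A + B) = (x == y).
Proof. by []. Qed.
Lemma inr_eq (A B : eqType) (x y : B) : (inr x == inr y :> A + B) = (x == y).
Proof. by []. Qed.

Lemma hard m n (theta : Bset (Kmn_lt m.+2 n.+2) -> Bset (Kmn_lt m.+2 n.+2)) :
  m <= n -> inAM theta -> is_proper theta.
Proof.
move=> lemn [[[g tg gt] _] adm].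
pose p i j := bx (g (mkB i j)); pose q i j := by_ (g (mkB i j)).
have gE : forall i j, g (mkB i j) = mkB (p i j) (q i j) by move=> i j; exact: bE.
have Hp : forall a b c d k, (p a c == k) + (p b d == k) = (p b c == k) + (p a d == k).
  move=> a b c d k; have := cycle4 tg gt adm a b c d (inl k).
  rewrite !gE /= !inl_eq !addn0; exact.
have Hq : forall a b c d k, (q a c == k) + (q b d == k) = (q b c == k) + (q a d == k).
  move=> a b c d k; have := cycle4 tg gt adm a b c d (inr k).
  rewrite !gE /= !inr_eq !add0n => /esym; exact.
have ginj : forall i j i' j', p i j = p i' j' -> q i j = q i' j' -> i = i' /\ j = j'.
  move=> i j i' j' e1 e2.
  have : g (mkB i j) = g (mkB i' j') by rewrite !gE e1 e2.
  by move/(can_inj gt)/(congr1 val) => [-> ->].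
have := dep (fun a b c d => ms (Hp a b c d)).
have := dep (fun a b c d => ms (Hq a b c d)).
case=> Hq'; case=> Hp'.
- have [_] := ginj ord0 ord0 ord0 ord_max (Hp' _ _ _) (Hq' _ _ _).
  by move/(congr1 val).
- have P'inj : injective (fun j => p ord0 j).
    by move=> a b e; case: (ginj ord0 a ord0 b e (Hq' _ _ _)).
  have Enm : n = m by have := leq_card _ P'inj; rewrite !card_ord; lia.
  subst n.
  have Q'inj : injective (fun i => q i ord0).
    by move=> a b e; case: (ginj a ord0 b ord0 (Hp' _ _ _) e).
  right; exists (fun x => match x with inl i => inr (invF P'inj i) | inr j => inl (invF Q'inj j) end).
  split; first split.
  + exists (fun x => match x with inl i => inr (q i ord0) | inr j => inl (p ord0 j) end).
      case=> x /=; [congr inl; exact: (f_invF P'inj) | congr inr; exact: (f_invF Q'inj)].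
    case=> x /=; [congr inl; exact: (invF_f Q'inj) | congr inr; exact: (invF_f P'inj)].
  + by case=> x [] y.
  + move=> b; rewrite -{2 3}(tg b) (bE (theta b)) gE /= (Hq' _ _ ord0) (Hp' _ ord0).
    by congr (inl _, inr _); [exact: (esym (invF_f Q'inj _)) | exact: (esym (invF_f P'inj _))].
- have Pinj : injective (fun i => p i ord0).
    by move=> a b e; case: (ginj a ord0 b ord0 e (Hq' _ _ _)).
  have Qinj : injective (fun j => q ord0 j).
    by move=> a b e; case: (ginj ord0 a ord0 b (Hp' _ _ _) e).
  left; exists (fun x => match x with inl i => inl (invF Pinj i) | inr j => inr (invF Qinj j) end).
  split; first split.
  + exists (fun x => match x with inl i => inl (p i ord0) | inr j => inr (q ord0 j) end).
      case=> x /=; [congr inl; exact: (f_invF Pinj) | congr inr; exact: (f_invF Qinj)].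
    case=> x /=; [congr inl; exact: (invF_f Pinj) | congr inr; exact: (invF_f Qinj)].
  + by case=> x [] y.
  + move=> b; rewrite -{2 3}(tg b) (bE (theta b)) gE /= (Hp' _ _ ord0) (Hq' _ ord0).
    by congr (inl _, inr _); [exact: (esym (invF_f Pinj _)) | exact: (esym (invF_f Qinj _))].
- have [e _] := ginj ord0 ord0 ord_max ord0 (Hp' _ _ _) (Hq' _ _ _).
  by move/(congr1 val): e.
Qed.

Theorem proposition4p14 (m n : nat) :
  2 <= m -> m <= n ->
  forall theta : Bset (Kmn_lt m n) -> Bset (Kmn_lt m n),
    is_proper theta <-> inAM theta.
Proof.
case: m => [|[|m]] // _; case: n => [|[|n]] //.
rewrite ltnS ltnS => lemn theta.
split; first exact: easy.
exact: hard lemn.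
Qed.
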